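(* Let $\ell \geq 2$ and $s \geq 1$ be integers, and let $p_n/q_n$ ($n \ge 0$) be the $n$th convergent of the regular continued fraction of $$s e^{1/(\ell s)} = [s, \ell - 1, 1, 2s-1, 3\ell - 1, 1, 2s-1, 5\ell - 1, 1, 2s-1, \dots, (2k-1)\ell - 1, 1, 2s-1, \dots].$$ Then $$\sum_{n \geq 0} \left|p_n - s e^{1/(\ell s)} q_n\right| = e^{1/(\ell s)} \sqrt{\frac{\pi s}{\ell}}\, \operatorname{erf}\!\left(1/\sqrt{\ell s}\right).$$ Moreover, let $s \geq 1$ be an integer and let $p_n^*/q_n^*$ ($n\ge 0$) be the $n$th convergent of the regular continued fraction of $$s e^{1/s} = [s+1, 2s-1, 2, 1, 2s-1, 4, 1, \dots, 2s-1, 2k, 1, \dots].$$ Then $$\sum_{n \geq 0} \left|p_n^* - s e^{1/s} q_n^*\right| = e^{1/s} \sqrt{\pi s}\, \operatorname{erf}\!\left(1/\sqrt{s}\right) + s\left(1-e^{1/s}\right) - 1.$$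
   Context: The error function is $\operatorname{erf}(x) = \frac{2}{\sqrt{\pi}}\int_0^x e^{-t^2}\,dt$. For a real number $\alpha$ with regular continued fraction $[a_0,a_1,a_2,\dots]$, the $n$th convergent is $p_n/q_n = [a_0,\dots,a_n]$ in lowest terms, with $q_n>0$ (equivalently $p_{-1}=1,q_{-1}=0,p_0=a_0,q_0=1$, $p_n=a_np_{n-1}+p_{n-2}$, $q_n=a_nq_{n-1}+q_{n-2}$). *)

(* Defs.v *)
From Stdlib Require Import Reals ZArith Lia.
From Coquelicot Require Import Coquelicot.
Open Scope R_scope.

Definition erf (x : R) : R :=
  2 / sqrt PI * RInt (fun t => exp (- t ^ 2)) 0 x.

(* floor: for Stdlib's [up], [Int_part r = up r - 1] is exactly the floor of r. *)
Definition floorR (r : R) : Z := Int_part r.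

Fixpoint cf_rem (x : R) (n : nat) : R :=
  match n with
  | O => x
  | S m => / (cf_rem x m - IZR (floorR (cf_rem x m)))
  end.

Definition cf_digit (x : R) (n : nat) : Z := floorR (cf_rem x n).

(* ((p_n, q_n), (p_{n-1}, q_{n-1})) with p_{-1}=1, q_{-1}=0, p_0=a_0, q_0=1,
   p_n = a_n p_{n-1} + p_{n-2}, q_n = a_n q_{n-1} + q_{n-2}. *)
Fixpoint cf_pq (x : R) (n : nat) : (R * R) * (R * R) :=
  match n with
  | O => ((IZR (cf_digit x 0), 1), (1, 0))
  | S m =>
      let '((p, q), (p', q')) := cf_pq x m in
      let a := IZR (cf_digit x (S m)) in
      ((a * p + p', a * q + q'), (p, q))
  end.

Definition cf_p (x : R) (n : nat) : R := fst (fst (cf_pq x n)).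
Definition cf_q (x : R) (n : nat) : R := snd (fst (cf_pq x n)).

(* Claimed expansion [s, l-1, 1, 2s-1, 3l-1, 1, 2s-1, ..., (2k-1)l-1, 1, 2s-1, ...]. *)
Definition digits1 (l s : Z) (n : nat) : Z :=
  match n with
  | O => s
  | _ =>
    match (n mod 3)%nat with
    | 1%nat => (2 * Z.of_nat ((n + 2) / 3) - 1) * l - 1
    | 2%nat => 1
    | _ => 2 * s - 1
    end
  end%Z.

(* Claimed expansion [s+1, 2s-1, 2, 1, 2s-1, 4, 1, ..., 2s-1, 2k, 1, ...]. *)
Definition digits2 (s : Z) (n : nat) : Z :=
  match n with
  | O => s + 1
  | _ =>
    match (n mod 3)%nat with
    | 1%nat => 2 * s - 1
    | 2%nat => 2 * Z.of_nat ((n + 1) / 3)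
    | _ => 1
    end
  end%Z.

(* Main.v *)
Require Import Defs.
From Stdlib Require Import Reals ZArith Lia Lra.
From Coquelicot Require Import Coquelicot.
Open Scope R_scope.


Definition ue (z : R) (k : nat) := / INR (fact k) * z ^ k.
Definition De (K : nat) (z : R) := exp z - sum_n (ue z) K.

Lemma exp_ser z : is_lim_seq (sum_n (ue z)) (exp z).
Proof.
  assert (H: is_series (ue z) (exp z)).
  { apply is_series_Reals. unfold exp. destruct (exist_exp z) as [l Hl]. simpl. exact Hl. }
  exact H.
Qed.

Lemma sum_diff (a : nat -> R) K N : (K <= N)%nat -> sum_n a N - sum_n a K = sum_n_m a (S K) N.
Proof. intros H. symmetry. exact (@sum_n_m_sum_n R_AbelianGroup a K N H). Qed.

Lemma ue_nonneg z k : 0 <= z -> 0 <= ue z k.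
Proof. intros. unfold ue. apply Rmult_le_pos. left. apply Rinv_0_lt_compat, lt_0_INR, lt_O_fact. apply pow_le; lra. Qed.

Lemma ue_mono z Z k : 0 <= z <= Z -> ue z k <= ue Z k.
Proof. intros. unfold ue. apply Rmult_le_compat_l. left. apply Rinv_0_lt_compat, lt_0_INR, lt_O_fact. apply pow_incr; lra. Qed.

Lemma De_bounds K z Z : 0 <= z <= Z -> 0 <= De K z <= De K Z.
Proof.
  intros Hz. unfold De. split.
  - assert (H := is_lim_seq_le_loc (fun _ => 0) (fun N => sum_n (ue z) N - sum_n (ue z) K) 0 (exp z - sum_n (ue z) K)).
    simpl in H. apply H.
    + exists K. intros N HN. rewrite sum_diff by lia.
      apply Rle_trans with (sum_n_m (fun _ => 0) (S K) N).
      right. symmetry. exact (@sum_n_m_const_zero R_AbelianMonoid (S K) N).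
      apply sum_n_m_le. intros; apply ue_nonneg; lra.
    + apply is_lim_seq_const.
    + apply is_lim_seq_minus'. apply exp_ser. apply is_lim_seq_const.
  - assert (H := is_lim_seq_le_loc (fun N => sum_n (ue z) N - sum_n (ue z) K) (fun N => sum_n (ue Z) N - sum_n (ue Z) K) (exp z - sum_n (ue z) K) (exp Z - sum_n (ue Z) K)).
    simpl in H. apply H.
    + exists K. intros N HN. rewrite !sum_diff by lia.
      apply sum_n_m_le. intros; apply ue_mono; lra.
    + apply is_lim_seq_minus'. apply exp_ser. apply is_lim_seq_const.
    + apply is_lim_seq_minus'. apply exp_ser. apply is_lim_seq_const.
Qed.

Lemma De_lim Z : is_lim_seq (fun K => De K Z) 0.
Proof.
  unfold De. replace 0 with (exp Z - exp Z) by ring.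
  apply is_lim_seq_minus'. apply is_lim_seq_const. apply exp_ser.
Qed.


Lemma isR_scal (f : R -> R) a b k v : is_RInt f a b v -> is_RInt (fun y => k * f y) a b (k * v).
Proof. intro H. exact (@is_RInt_scal R_NormedModule f a b k v H). Qed.
Lemma isR_plus (f g : R -> R) a b u v : is_RInt f a b u -> is_RInt g a b v -> is_RInt (fun y => f y + g y) a b (u + v).
Proof. intros H1 H2. exact (@is_RInt_plus R_NormedModule f g a b u v H1 H2). Qed.
Lemma isR_minus (f g : R -> R) a b u v : is_RInt f a b u -> is_RInt g a b v -> is_RInt (fun y => f y - g y) a b (u - v).
Proof. intros H1 H2. exact (@is_RInt_minus R_NormedModule f g a b u v H1 H2). Qed.
Lemma isR_uniq (f : R -> R) a b u v : is_RInt f a b u -> is_RInt f a b v -> u = v.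
Proof. intros H1 H2. rewrite <- (@is_RInt_unique R_CompleteNormedModule f a b u H1). exact (@is_RInt_unique R_CompleteNormedModule f a b v H2). Qed.

Lemma RInt_scalR (f : R -> R) a b k : ex_RInt f a b -> RInt (fun x => k * f x) a b = k * RInt f a b.
Proof. intro H. exact (@RInt_scal R_CompleteNormedModule f a b k H). Qed.

Lemma RInt_extR (f g : R -> R) a b : (forall x, Rmin a b < x < Rmax a b -> f x = g x) -> RInt f a b = RInt g a b.
Proof. intro H. exact (@RInt_ext R_CompleteNormedModule f g a b H). Qed.

Section JS.
Variable c : R.
Hypothesis Hc : 0 < c.

Definition jf (a b : nat) (t : R) := t ^ a * (1 - t) ^ b * exp (c * t).
Definition J (a b : nat) := RInt (jf a b) 0 1.

Lemma jf_cont a b t : continuous (jf a b) t.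
Proof. apply (@ex_derive_continuous R_AbsRing R_NormedModule). unfold jf. auto_derive. trivial. Qed.

Lemma jf_ex a b : ex_RInt (jf a b) 0 1.
Proof. apply (@ex_RInt_continuous R_CompleteNormedModule). intros; apply jf_cont. Qed.

Lemma J_correct a b : is_RInt (jf a b) 0 1 (J a b).
Proof. apply (@RInt_correct R_CompleteNormedModule), jf_ex. Qed.

Lemma J_pos a b : 0 < J a b.
Proof.
  unfold J. apply Rle_lt_trans with (RInt (fun _ => 0) 0 1).
  rewrite RInt_const. right. unfold scal; simpl; unfold mult; simpl; ring.
  apply RInt_lt. lra.
  intros; apply jf_cont.
  intros; apply continuous_const.
  intros x Hx. unfold jf. apply Rmult_lt_0_compat. apply Rmult_lt_0_compat.
  apply pow_lt; lra. apply pow_lt; lra. apply exp_pos.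
Qed.

Lemma J_split a b : J a b = J a (S b) + J (S a) b.
Proof.
  apply (isR_uniq (jf a b) 0 1). apply J_correct.
  eapply is_RInt_ext; [|apply isR_plus; [apply (J_correct a (S b))|apply (J_correct (S a) b)]].
  intros t _. unfold jf. simpl. ring.
Qed.

Lemma J_ibp a b : INR (S a) * J a (S b) - INR (S b) * J (S a) b + c * J (S a) (S b) = 0.
Proof.
  set (F := fun t => t^(S a) * (1-t)^(S b) * exp(c*t)).
  set (g := fun t => INR (S a) * jf a (S b) t - INR (S b) * jf (S a) b t + c * jf (S a) (S b) t).
  apply (isR_uniq g 0 1).
  apply isR_plus. apply isR_minus; apply isR_scal; apply J_correct. apply isR_scal; apply J_correct.
  enough (H: is_RInt g 0 1 (minus (F 1) (F 0))).
  { replace (minus (F 1) (F 0)) with 0 in H. exact H. unfold F, minus, plus, opp; simpl. ring. }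
  apply (@is_RInt_derive R_CompleteNormedModule).
  - intros t _. unfold F, g, jf. auto_derive. trivial.
    replace (match a with 0%nat => 1 | S _ => INR a + 1 end) with (INR (S a)) by (destruct a; simpl; ring).
    replace (match b with 0%nat => 1 | S _ => INR b + 1 end) with (INR (S b)) by (destruct b; simpl; ring).
    simpl pow. unfold Rminus. ring.
  - intros t _. unfold g. apply (@ex_derive_continuous R_AbsRing R_NormedModule). unfold jf. auto_derive. trivial.
Qed.

Definition W k := c ^ k / INR (fact k).
Definition A k := W k * J k k.
Definition B k := W k * J k (S k).

Lemma W_pos k : 0 < W k.
Proof. unfold W. apply Rdiv_lt_0_compat. apply pow_lt; lra. apply lt_0_INR, lt_O_fact. Qed.
Lemma W_S k : W (S k) = W k * c / INR (S k).
Proof. unfold W. rewrite fact_simpl, mult_INR. simpl pow. field. split. apply INR_fact_neq_0. apply not_0_INR; lia. Qed.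
Lemma A_pos k : 0 < A k.
Proof. unfold A. apply Rmult_lt_0_compat. apply W_pos. apply J_pos. Qed.
Lemma B_pos k : 0 < B k.
Proof. unfold B. apply Rmult_lt_0_compat. apply W_pos. apply J_pos. Qed.

Lemma AB1 k : A k - A (S k) = 2 * B k.
Proof.
  pose proof (J_ibp k k) as H1. pose proof (J_split k k) as H2.
  assert (HX: J (S k) (S k) = INR (S k) * (J (S k) k - J k (S k)) / c).
  { apply (Rmult_eq_reg_l c); [|lra].
    replace (c * (INR (S k) * (J (S k) k - J k (S k)) / c)) with (INR (S k) * (J (S k) k - J k (S k))) by (field; lra).
    lra. }
  unfold A, B. rewrite W_S, HX, H2. field. split; [lra| apply not_0_INR; lia].
Qed.

Lemma AB2 k : c * (B (S k) + B k) = (2 * INR k + 3) * A (S k).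
Proof.
  pose proof (J_ibp k (S k)) as H1. pose proof (J_split k (S k)) as H2.
  assert (HY: J (S k) (S (S k)) = (INR (S (S k)) * J (S k) (S k) - INR (S k) * J k (S (S k))) / c).
  { apply (Rmult_eq_reg_l c); [|lra].
    replace (c * ((INR (S (S k)) * J (S k) (S k) - INR (S k) * J k (S (S k))) / c)) with (INR (S (S k)) * J (S k) (S k) - INR (S k) * J k (S (S k))) by (field; lra).
    lra. }
  unfold A, B. rewrite W_S, HY, H2. rewrite !S_INR. field. pose proof (pos_INR k). split; lra.

Qed.

Lemma AB3 s k : 0 < s -> c * s <= 1 -> s * A (S k) < B k.
Proof.
  intros Hs Hcs.
  pose proof (J_split k (S k)) as H2. pose proof (J_pos k (S (S k))). pose proof (J_pos (S k) (S k)).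
  pose proof (W_pos k). pose proof (pos_INR k).
  unfold A, B. rewrite W_S, H2. rewrite S_INR.
  apply Rle_lt_trans with (W k * J (S k) (S k)).
  - replace (s * (W k * c / (INR k + 1) * J (S k) (S k))) with ((c * s) * (W k * J (S k) (S k)) / (INR k + 1)) by (field; lra).
    apply Rmult_le_reg_r with (INR k + 1). lra.
    replace ((c * s) * (W k * J (S k) (S k)) / (INR k + 1) * (INR k + 1)) with ((c * s) * (W k * J (S k) (S k))) by (field; lra).
    assert (0 < W k * J (S k) (S k)) by (apply Rmult_lt_0_compat; lra).
    nra.
  - nra.
Qed.

Lemma J00 : J 0 0 = (exp c - 1) / c.
Proof.
  apply (isR_uniq (jf 0 0) 0 1). apply J_correct.
  set (F := fun t => exp (c * t) / c).
  replace ((exp c - 1) / c) with (minus (F 1) (F 0)).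
  apply (@is_RInt_derive R_CompleteNormedModule).
  - intros t _. unfold F, jf. auto_derive. trivial. simpl. field. lra.
  - intros; apply jf_cont.
  - unfold F, minus, plus, opp; simpl. rewrite Rmult_0_r, Rmult_1_r, exp_0. field. lra.
Qed.

Lemma J01 : J 0 1 = exp c / c ^ 2 - 1 / c - 1 / c ^ 2.
Proof.
  apply (isR_uniq (jf 0 1) 0 1). apply J_correct.
  set (F := fun t => ((1 - t) / c + 1 / c ^ 2) * exp (c * t)).
  replace (exp c / c ^ 2 - 1 / c - 1 / c ^ 2) with (minus (F 1) (F 0)).
  apply (@is_RInt_derive R_CompleteNormedModule).
  - intros t _. unfold F, jf. auto_derive. trivial. simpl. field. lra.
  - intros; apply jf_cont.
  - unfold F, minus, plus, opp; simpl. rewrite Rmult_0_r, Rmult_1_r, exp_0. field. lra.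
Qed.

Definition Pk K t := sum_n (ue (c * (t * (1 - t)))) K.

Lemma Pk_int K : is_RInt (fun t => Pk K t * exp (c * t)) 0 1 (sum_n A K).
Proof.
  induction K.
  - rewrite sum_O. eapply is_RInt_ext; [|apply (isR_scal (jf 0 0) 0 1 (W 0) (J 0 0) (J_correct 0 0))].
    intros t _. unfold Pk. rewrite sum_O. unfold ue, jf, W. simpl. field.
  - rewrite sum_Sn. eapply is_RInt_ext; [|apply (isR_plus _ _ _ _ _ _ IHK (isR_scal (jf (S K) (S K)) 0 1 (W (S K)) _ (J_correct (S K) (S K))))].
    intros t _. unfold Pk. rewrite sum_Sn. unfold plus; simpl. unfold ue, jf, W.
    rewrite !Rpow_mult_distr. field. apply INR_fact_neq_0.
Qed.

Definition Ig := RInt (fun t => exp (c * (t * (1 - t)) + c * t)) 0 1.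

Lemma Ig_correct : is_RInt (fun t => exp (c * (t * (1 - t)) + c * t)) 0 1 Ig.
Proof.
  apply (@RInt_correct R_CompleteNormedModule). apply (@ex_RInt_continuous R_CompleteNormedModule).
  intros. apply (@ex_derive_continuous R_AbsRing R_NormedModule). auto_derive. trivial.
Qed.

Lemma A_series : is_series A Ig.
Proof.
  assert (Hb: forall K, Ig - exp c * De K c <= sum_n A K <= Ig).
  { intro K.
    assert (H := isR_minus (fun t => exp (c * (t * (1 - t)) + c * t)) (fun t => Pk K t * exp (c * t)) 0 1 _ _ Ig_correct (Pk_int K)).
    set (h := fun y => exp (c * (y * (1 - y)) + c * y) - Pk K y * exp (c * y)) in H.
    assert (Hh: forall y, 0 <= y <= 1 -> 0 <= h y <= exp c * De K c).
    { intros y Hy. unfold h.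
      replace (exp (c * (y * (1 - y)) + c * y) - Pk K y * exp (c * y)) with (De K (c * (y * (1 - y))) * exp (c * y)).
      2:{ unfold De, Pk. rewrite exp_plus. ring. }
      assert (Hy2: 0 <= y * (1 - y) <= 1) by (split; nra).
      assert (Hz: 0 <= c * (y * (1 - y)) <= c) by (split; nra).
      destruct (De_bounds K _ _ Hz) as [H1 H2].
      assert (exp (c * y) <= exp c). { destruct (Req_dec y 1). subst; rewrite Rmult_1_r; lra. left; apply exp_increasing; nra. }
      pose proof (exp_pos (c * y)). split. nra. nra. }
    assert (Hex: ex_RInt h 0 1) by (eexists; exact H).
    assert (HI: RInt h 0 1 = Ig - sum_n A K) by (apply (@is_RInt_unique R_CompleteNormedModule); exact H).
    assert (L1: 0 <= RInt h 0 1).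
    { apply Rle_trans with (RInt (fun _ => 0) 0 1).
      rewrite RInt_const. right. unfold scal; simpl; unfold mult; simpl; ring.
      apply RInt_le. lra. apply (@ex_RInt_const R_CompleteNormedModule). exact Hex.
      intros; apply Hh; lra. }
    assert (L2: RInt h 0 1 <= exp c * De K c).
    { apply Rle_trans with (RInt (fun _ => exp c * De K c) 0 1).
      apply RInt_le. lra. exact Hex. apply (@ex_RInt_const R_CompleteNormedModule).
      intros; apply Hh; lra.
      rewrite RInt_const. right. unfold scal; simpl; unfold mult; simpl; ring. }
    lra. }
  change (is_lim_seq (sum_n A) Ig).
  apply is_lim_seq_le_le with (u := fun K => Ig - exp c * De K c) (w := fun _ => Ig).
  exact Hb.
  replace (Finite Ig) with (Finite (Ig - exp c * 0)) by (f_equal; ring).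
  apply is_lim_seq_minus'. apply is_lim_seq_const.
  apply (is_lim_seq_scal_l (fun K => De K c) (exp c) 0). apply De_lim.
  apply is_lim_seq_const.
Qed.

Lemma Ig_gauss : sqrt c * Ig = exp c * RInt (fun v => exp (- v ^ 2)) 0 (sqrt c).
Proof.
  set (f := fun v => exp (- v ^ 2)).
  assert (exf: forall a b, ex_RInt f a b).
  { intros. apply (@ex_RInt_continuous R_CompleteNormedModule). intros.
    apply (@ex_derive_continuous R_AbsRing R_NormedModule). unfold f. auto_derive. trivial. }
  pose proof (RInt_comp_lin f (- sqrt c) (sqrt c) 0 1 (exf _ _)) as H.
  replace (- sqrt c * 0 + sqrt c) with (sqrt c) in H by ring.
  replace (- sqrt c * 1 + sqrt c) with 0 in H by ring.
  rewrite <- (opp_RInt_swap f 0 (sqrt c) (exf _ _)) in H.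
  assert (Hs: sqrt c * sqrt c = c) by (apply sqrt_sqrt; lra).
  assert (H2: RInt (fun y => - sqrt c * f (- sqrt c * y + sqrt c)) 0 1 = - RInt f 0 (sqrt c)) by exact H.
  clear H. rename H2 into H.
  assert (He: RInt (fun y => - sqrt c * f (- sqrt c * y + sqrt c)) 0 1 =
              RInt (fun y => - (sqrt c / exp c) * exp (c * (y * (1 - y)) + c * y)) 0 1).
  { apply RInt_extR. intros y _. unfold f.
    replace (c * (y * (1 - y)) + c * y) with (c + - (- sqrt c * y + sqrt c) ^ 2).
    rewrite exp_plus. field. apply Rgt_not_eq, exp_pos.
    simpl. replace (c * (y * (1 - y)) + c * y) with (c - (sqrt c * sqrt c) * (1 - y) * (1 - y)) by (rewrite Hs; ring). ring. }
  rewrite He in H. rewrite RInt_scalR in H.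
  2:{ apply (@ex_RInt_continuous R_CompleteNormedModule). intros.
    apply (@ex_derive_continuous R_AbsRing R_NormedModule). auto_derive. trivial. }
  fold Ig in H.
  fold f. pose proof (exp_pos c).
  apply (Rmult_eq_reg_l (- / exp c)). 2:{ apply Ropp_neq_0_compat, Rinv_neq_0_compat; lra. }
  replace (- / exp c * (exp c * RInt f 0 (sqrt c))) with (- RInt f 0 (sqrt c)) by (field; lra).
  rewrite <- H. field. lra.
Qed.
End JS.


Lemma sumR_S (f : nat -> R) n : sum_n f (S n) = sum_n f n + f (S n).
Proof. exact (@sum_Sn R_AbelianMonoid f n). Qed.
Lemma sumR_O (f : nat -> R) : sum_n f 0 = f 0%nat.
Proof. exact (@sum_O R_AbelianMonoid f). Qed.

Section G3.
Variable f : nat -> R.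
Hypothesis fpos : forall n, 0 <= f n.
Let g k := f (3 * k) + f (3 * k + 1) + f (3 * k + 2).

Lemma g3_sum K : sum_n f (3 * K + 2) = sum_n g K.
Proof.
  induction K.
  - simpl. rewrite !sumR_S, !sumR_O. unfold g. simpl. ring.
  - replace (3 * S K + 2)%nat with (S (S (S (3 * K + 2)))) by lia.
    rewrite !sumR_S, IHK. unfold g.
    replace (S (S (S (3 * K + 2)))) with (3 * S K + 2)%nat by lia.
    replace (S (S (3 * K + 2))) with (3 * S K + 1)%nat by lia.
    replace (S (3 * K + 2)) with (3 * S K)%nat by lia.
    match goal with |- ?A = ?B => change (@eq R A B) end. ring.
Qed.

Lemma g3_mono m n : (m <= n)%nat -> sum_n f m <= sum_n f n.
Proof.
  induction 1. lra. rewrite sumR_S. pose proof (fpos (S m0)). lra.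
Qed.

Lemma lim_div3 (u : nat -> R) l : is_lim_seq u l -> is_lim_seq (fun N => u (N / 3)%nat) l.
Proof.
  intros H. unfold is_lim_seq in *. eapply filterlim_comp; [|exact H].
  intros P [M HM]. exists (3 * M)%nat. intros n Hn. apply HM.
  apply Nat.div_le_lower_bound; lia.
Qed.

Lemma group3 L : is_series g L -> is_series f L.
Proof.
  intros H.
  assert (Hg0 : is_lim_seq g 0) by (apply ex_series_lim_0; eexists; exact H).
  change (is_lim_seq (sum_n f) L).
  apply is_lim_seq_le_le with (u := fun N => sum_n g (N / 3)%nat - g (N / 3)%nat) (w := fun N => sum_n g (N / 3)%nat).
  - intro N. pose proof (Nat.div_mod N 3) as HD. pose proof (Nat.mod_upper_bound N 3) as HM.
    split.
    + destruct (N / 3)%nat as [|K] eqn:HK.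
      * rewrite sumR_O. apply Rle_trans with (sum_n f 0). rewrite sumR_O. pose proof (fpos 0). lra.
        apply g3_mono. lia.
      * rewrite sumR_S. rewrite <- g3_sum. assert (E: forall u v : R, u + v - v = u) by (intros; ring). rewrite E.
        apply g3_mono. lia.
    + rewrite <- g3_sum. apply g3_mono. lia.
  - replace (Finite L) with (Finite (L - 0)) by (f_equal; ring).
    apply is_lim_seq_minus'. apply (lim_div3 (sum_n g)). exact H. apply (lim_div3 g). exact Hg0.
  - apply (lim_div3 (sum_n g)). exact H.
Qed.
End G3.

Fixpoint pqa (a : nat -> Z) (n : nat) : (R * R) * (R * R) :=
  match n with
  | O => ((IZR (a 0%nat), 1), (1, 0))
  | S m =>
      let '((p, q), (p', q')) := pqa a m in
      let d := IZR (a (S m)) in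
      ((d * p + p', d * q + q'), (p, q))
  end.

Lemma cf_pq_eq x a n : (forall k, (k <= n)%nat -> cf_digit x k = a k) -> cf_pq x n = pqa a n.
Proof.
  induction n; intros H.
  - cbn [cf_pq pqa]. rewrite H by lia. reflexivity.
  - cbn [cf_pq pqa]. rewrite IHn by (intros; apply H; lia). rewrite H by lia. reflexivity.
Qed.

Definition ep a x n := fst (fst (pqa a n)) - x * snd (fst (pqa a n)).
Definition epp a x n := fst (snd (pqa a n)) - x * snd (snd (pqa a n)).

Lemma ep_0 a x : ep a x 0 = IZR (a 0%nat) - x.
Proof. unfold ep; simpl; ring. Qed.
Lemma epp_0 a x : epp a x 0 = 1.
Proof. unfold epp; simpl; ring. Qed.
Lemma ep_S a x n : ep a x (S n) = IZR (a (S n)) * ep a x n + epp a x n.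
Proof. unfold ep, epp; simpl. destruct (pqa a n) as [[p q] [p' q']]; simpl; ring. Qed.
Lemma epp_S a x n : epp a x (S n) = ep a x n.
Proof. unfold ep, epp; simpl. destruct (pqa a n) as [[p q] [p' q']]; simpl; ring. Qed.

Lemma floor_eq r z : IZR z <= r < IZR z + 1 -> floorR r = z.
Proof.
  intros [H1 H2]. unfold floorR, Int_part.
  rewrite <- (tech_up r (z + 1)). lia.
  rewrite plus_IZR; lra. rewrite plus_IZR; lra.
Qed.

Section CF.
Variables (x : R) (a : nat -> Z).
Hypothesis H0 : 0 < x - IZR (a 0%nat) < 1.
Hypothesis Hs : forall n, 0 < - ep a x (S n) / ep a x n < 1.

Lemma ep_nz n : ep a x n <> 0.
Proof.
  destruct n. rewrite ep_0. lra.
  intro E. specialize (Hs n). rewrite E in Hs. unfold Rdiv in Hs. rewrite Ropp_0, Rmult_0_l in Hs. lra.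
Qed.

Lemma cf_main n : cf_digit x n = a n /\ cf_rem x (S n) = - epp a x n / ep a x n.
Proof.
  induction n.
  - assert (D: cf_digit x 0 = a 0%nat).
    { unfold cf_digit. simpl. apply floor_eq. lra. }
    split. exact D. cbn [cf_rem]. change (floorR x) with (cf_digit x 0). rewrite D, epp_0, ep_0. field. lra.
  - destruct IHn as [_ IH].
    pose proof (ep_nz n). pose proof (ep_nz (S n)).
    assert (Hr: cf_rem x (S n) - IZR (a (S n)) = - ep a x (S n) / ep a x n).
    { rewrite IH, ep_S. field. auto. }
    assert (D: cf_digit x (S n) = a (S n)).
    { unfold cf_digit. apply floor_eq. specialize (Hs n). lra. }
    split. exact D.
    change (cf_rem x (S (S n))) with (/ (cf_rem x (S n) - IZR (floorR (cf_rem x (S n))))).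
    fold (cf_digit x (S n)). rewrite D, Hr, epp_S. field. auto.
Qed.

Lemma cf_digits n : cf_digit x n = a n.
Proof. apply cf_main. Qed.

Lemma cf_eps n : cf_p x n - x * cf_q x n = ep a x n.
Proof.
  unfold cf_p, cf_q. rewrite (cf_pq_eq x a n) by (intros; apply cf_digits). reflexivity.
Qed.
End CF.


Lemma ratio01 p q : 0 < p < q -> 0 < p / q < 1.
Proof.
  intros [H1 H2]. split. apply Rdiv_lt_0_compat; lra.
  apply (Rmult_lt_reg_r q). lra. unfold Rdiv. rewrite Rmult_assoc, Rinv_l by lra. lra.
Qed.

Section EPS.
Variables c s l : R.
Hypothesis Hc : 0 < c.
Hypothesis Hs1 : 1 <= s.
Hypothesis Hl1 : 1 <= l.
Hypothesis Hcls : c * (l * s) = 1.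

Definition E0 k := - (-1) ^ k * (c * s) * A c k.
Definition E2 k := - (-1) ^ k * c * B c k.
Definition E1 k := E2 k - E0 k.

Lemma sg_nz k : (-1) ^ k <> 0.
Proof. apply pow_nonzero. lra. Qed.

Lemma R1 k : 2 * s * E2 k - E0 k = E0 (S k).
Proof.
  pose proof (AB1 c Hc k). unfold E0, E2. simpl pow.
  replace (A c (S k)) with (A c k - 2 * B c k) by lra. ring.
Qed.

Lemma R2 k : E1 (S k) = ((2 * INR k + 3) * l - 1) * E0 (S k) + E2 k.
Proof.
  pose proof (AB2 c Hc k) as H. unfold E1, E0, E2. simpl pow.
  assert (HB: B c (S k) = ((2 * INR k + 3) * A c (S k) - c * B c k) / c).
  { apply (Rmult_eq_reg_l c); [|lra]. field_simplify; [|lra]. lra. }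
  rewrite HB. assert (Hl: l = / (c * s)).
  { apply (Rmult_eq_reg_l (c * s)). rewrite Rinv_r. lra. nra. nra. }
  rewrite Hl. field. lra.
Qed.

Lemma sA_pos k : 0 < s * A c k.
Proof. pose proof (A_pos c Hc k). nra. Qed.

Lemma B_lt k : 2 * B c k < s * A c k.
Proof. pose proof (AB1 c Hc k). pose proof (A_pos c Hc (S k)). pose proof (A_pos c Hc k). nra. Qed.

Lemma C0 k : 0 < - E1 k / E0 k < 1.
Proof.
  replace (- E1 k / E0 k) with ((s * A c k - B c k) / (s * A c k)).
  apply ratio01. pose proof (B_lt k). pose proof (B_pos c Hc k). lra.
  unfold E1, E0, E2. field. pose proof (sA_pos k). repeat split; try lra; try apply sg_nz.
  pose proof (A_pos c Hc k). lra.
Qed.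

Lemma C1 k : 0 < - E2 k / E1 k < 1.
Proof.
  replace (- E2 k / E1 k) with (B c k / (s * A c k - B c k)).
  apply ratio01. pose proof (B_lt k). pose proof (B_pos c Hc k). lra.
  unfold E1, E0, E2. field. pose proof (B_lt k). pose proof (B_pos c Hc k). repeat split; try lra; try apply sg_nz.
  replace (- (-1) ^ k * c * B c k - - (-1) ^ k * (c * s) * A c k) with ((-1) ^ k * (c * (s * A c k - B c k))) by ring.
  apply Rmult_integral_contrapositive. split. apply sg_nz. nra.
Qed.

Lemma C2 k : 0 < - E0 (S k) / E2 k < 1.
Proof.
  replace (- E0 (S k) / E2 k) with (s * A c (S k) / B c k).
  apply ratio01. split. apply sA_pos. apply AB3; [lra|lra|].
  assert (c * s * l = 1) by lra. nra.
  unfold E0, E2. simpl pow. field. pose proof (B_pos c Hc k). repeat split; try lra; try apply sg_nz.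
Qed.

Lemma abs_sg k y : Rabs ((-1) ^ k * y) = Rabs y.
Proof. rewrite Rabs_mult, pow_1_abs. ring. Qed.

Lemma abs_E0 k : Rabs (E0 k) = c * s * A c k.
Proof.
  unfold E0. replace (- (-1) ^ k * (c * s) * A c k) with ((-1) ^ k * (- (c * s * A c k))) by ring.
  rewrite abs_sg, Rabs_Ropp, Rabs_pos_eq. ring. pose proof (sA_pos k). nra.
Qed.
Lemma abs_E1 k : Rabs (E1 k) = c * (s * A c k - B c k).
Proof.
  unfold E1, E0, E2. replace (- (-1) ^ k * c * B c k - - (-1) ^ k * (c * s) * A c k) with ((-1) ^ k * (c * (s * A c k - B c k))) by ring.
  rewrite abs_sg, Rabs_pos_eq. ring. pose proof (B_lt k). pose proof (B_pos c Hc k). nra.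
Qed.
Lemma abs_E2 k : Rabs (E2 k) = c * B c k.
Proof.
  unfold E2. replace (- (-1) ^ k * c * B c k) with ((-1) ^ k * (- (c * B c k))) by ring.
  rewrite abs_sg, Rabs_Ropp, Rabs_pos_eq. ring. pose proof (B_pos c Hc k). nra.
Qed.

Definition En n := match (n mod 3)%nat with 0%nat => E0 (n / 3) | 1%nat => E1 (n / 3) | _ => E2 (n / 3) end.

Lemma divmod3 k r : (r < 3)%nat -> ((3 * k + r) / 3 = k /\ (3 * k + r) mod 3 = r)%nat.
Proof.
  intros. split. symmetry. apply Nat.div_unique with r; lia. symmetry. apply Nat.mod_unique with k; lia.
Qed.

Lemma En0 k : En (3 * k) = E0 k.
Proof. unfold En. destruct (divmod3 k 0) as [H1 H2]. lia. rewrite Nat.add_0_r in H1, H2. rewrite H1, H2. reflexivity. Qed.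
Lemma En1 k : En (3 * k + 1) = E1 k.
Proof. unfold En. destruct (divmod3 k 1) as [H1 H2]. lia. rewrite H1, H2. reflexivity. Qed.
Lemma En2 k : En (3 * k + 2) = E2 k.
Proof. unfold En. destruct (divmod3 k 2) as [H1 H2]. lia. rewrite H1, H2. reflexivity. Qed.

Lemma En_series : is_series (fun n => Rabs (En n)) (2 * c * s * Ig c).
Proof.
  apply group3. intros; apply Rabs_pos.
  eapply is_series_ext; [|apply (is_series_scal (2 * c * s) _ _ (A_series c Hc))].
  intro k. rewrite En0, En1, En2, abs_E0, abs_E1, abs_E2. unfold scal; simpl; unfold mult; simpl. ring.
Qed.

Lemma E00 : E0 0 = s - s * exp c.
Proof. unfold E0, A, W. simpl. rewrite J00 by lra. field. lra. Qed.
Lemma E20 : E2 0 = 1 - l * (s * exp c - s).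
Proof.
  unfold E2, B, W. simpl. rewrite J01 by lra.
  assert (Hl: l = / (c * s)).
  { apply (Rmult_eq_reg_l (c * s)). rewrite Rinv_r. lra. nra. nra. }
  rewrite Hl. field. lra.
Qed.
End EPS.


Lemma gauss_final c s l : 0 < l -> 0 < s -> c = / (l * s) ->
  exp c * sqrt (PI * s / l) * erf (/ sqrt (l * s)) = 2 * c * s * Ig c.
Proof.
  intros Hl Hs Hc.
  assert (Hc0 : 0 < c) by (rewrite Hc; apply Rinv_0_lt_compat; nra).
  unfold erf. rewrite <- sqrt_inv, <- Hc.
  pose proof (Ig_gauss c Hc0) as HG.
  assert (HS: sqrt (PI * s / l) = sqrt PI * s * sqrt c).
  { replace (PI * s / l) with (PI * ((s * s) * c)) by (rewrite Hc; field; lra).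
    pose proof PI_RGT_0.
    rewrite sqrt_mult, sqrt_mult, sqrt_square; try (ring || nra). }
  rewrite HS.
  replace (exp c * (sqrt PI * s * sqrt c) * (2 / sqrt PI * RInt (fun t : R => exp (- t ^ 2)) 0 (sqrt c)))
    with (2 * s * sqrt c * (exp c * RInt (fun t : R => exp (- t ^ 2)) 0 (sqrt c)) * (sqrt PI / sqrt PI)) by (field; apply Rgt_not_eq, sqrt_lt_R0, PI_RGT_0).
  rewrite <- HG. rewrite Rdiv_diag by (apply Rgt_not_eq, sqrt_lt_R0, PI_RGT_0).
  replace (2 * s * sqrt c * (sqrt c * Ig c) * 1) with (2 * s * (sqrt c * sqrt c) * Ig c) by ring.
  rewrite sqrt_sqrt by lra. ring.
Qed.

Lemma ep_SS a x n : ep a x (S (S n)) = IZR (a (S (S n))) * ep a x (S n) + ep a x n.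
Proof. rewrite ep_S, epp_S. reflexivity. Qed.

Lemma m3 k r : (r < 3)%nat -> ((3 * k + r) mod 3 = r)%nat.
Proof. intros. symmetry. apply Nat.mod_unique with k; lia. Qed.
Lemma d3 k r : (r < 3)%nat -> ((3 * k + r) / 3 = k)%nat.
Proof. intros. symmetry. apply Nat.div_unique with r; lia. Qed.

Lemma d1_1 LL SS k : digits1 LL SS (3 * k + 1) = ((2 * Z.of_nat (k + 1) - 1) * LL - 1)%Z.
Proof.
  replace (3 * k + 1)%nat with (S (3 * k)) by lia. unfold digits1.
  replace (S (3 * k) mod 3)%nat with 1%nat by (apply Nat.mod_unique with (k)%nat; lia).
  replace ((S (3 * k) + 2) / 3)%nat with (k + 1)%nat by (apply Nat.div_unique with 0%nat; lia).
  reflexivity.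
Qed.
Lemma d1_2 LL SS k : digits1 LL SS (3 * k + 2) = 1%Z.
Proof.
  replace (3 * k + 2)%nat with (S (3 * k + 1)) by lia. unfold digits1.
  replace (S (3 * k + 1) mod 3)%nat with 2%nat by (apply Nat.mod_unique with (k)%nat; lia).
  reflexivity.
Qed.
Lemma d1_3 LL SS k : digits1 LL SS (3 * k + 3) = (2 * SS - 1)%Z.
Proof.
  replace (3 * k + 3)%nat with (S (3 * k + 2)) by lia. unfold digits1.
  replace (S (3 * k + 2) mod 3)%nat with 0%nat by (apply Nat.mod_unique with (k + 1)%nat; lia).
  reflexivity.
Qed.
Lemma d2_1 SS k : digits2 SS (3 * k + 1) = (2 * SS - 1)%Z.
Proof.
  replace (3 * k + 1)%nat with (S (3 * k)) by lia. unfold digits2.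
  replace (S (3 * k) mod 3)%nat with 1%nat by (apply Nat.mod_unique with (k)%nat; lia).
  reflexivity.
Qed.
Lemma d2_2 SS k : digits2 SS (3 * k + 2) = (2 * Z.of_nat (k + 1))%Z.
Proof.
  replace (3 * k + 2)%nat with (S (3 * k + 1)) by lia. unfold digits2.
  replace (S (3 * k + 1) mod 3)%nat with 2%nat by (apply Nat.mod_unique with (k)%nat; lia).
  replace ((S (3 * k + 1) + 1) / 3)%nat with (k + 1)%nat by (apply Nat.div_unique with 0%nat; lia).
  reflexivity.
Qed.
Lemma d2_3 SS k : digits2 SS (3 * k + 3) = 1%Z.
Proof.
  replace (3 * k + 3)%nat with (S (3 * k + 2)) by lia. unfold digits2.
  replace (S (3 * k + 2) mod 3)%nat with 0%nat by (apply Nat.mod_unique with (k + 1)%nat; lia).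
  reflexivity.
Qed.


Lemma neg_div_pos (Y u : R) : u < 0 -> 0 < - Y / u -> 0 < Y.
Proof.
  intros Hu H. assert (E: Y = (- Y / u) * (- u)) by (field; lra).
  rewrite E. apply Rmult_lt_0_compat; lra.
Qed.

Lemma ep_to_En (f : nat -> R) c s :
  (forall k, f (3 * k)%nat = E0 c s k /\ f (S (3 * k)) = E1 c s k /\ f (S (S (3 * k))) = E2 c k) ->
  forall n, f n = En c s n.
Proof.
  intros T n. rewrite (Nat.div_mod n 3) by lia.
  pose proof (Nat.mod_upper_bound n 3) as HM.
  destruct (n mod 3)%nat as [|[|[|r]]] eqn:E; try lia.
  - rewrite Nat.add_0_r, En0. apply T.
  - rewrite En1. replace (3 * (n / 3) + 1)%nat with (S (3 * (n / 3))) by lia. apply T.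
  - rewrite En2. replace (3 * (n / 3) + 2)%nat with (S (S (3 * (n / 3)))) by lia. apply T.
Qed.

Lemma part1 (l s : nat) : (2 <= l)%nat -> (1 <= s)%nat ->
     let x := INR s * exp (/ (INR l * INR s)) in
     (forall n : nat, cf_digit x n = digits1 (Z.of_nat l) (Z.of_nat s) n) /\
     is_series (fun n : nat => Rabs (cf_p x n - x * cf_q x n))
       (exp (/ (INR l * INR s)) * sqrt (PI * INR s / INR l)
          * erf (/ sqrt (INR l * INR s))).
Proof.
  intros Hl Hs. cbv zeta.
  assert (Hl2: 2 <= INR l) by (replace 2 with (INR 2) by (simpl; ring); apply le_INR; lia).
  assert (Hs1: 1 <= INR s) by (replace 1 with (INR 1) by (simpl; ring); apply le_INR; lia).
  set (c := / (INR l * INR s)).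
  assert (Hc: 0 < c) by (apply Rinv_0_lt_compat; nra).
  assert (Hcls: c * (INR l * INR s) = 1) by (unfold c; field; split; lra).
  set (x := INR s * exp c).
  set (d := digits1 (Z.of_nat l) (Z.of_nat s)).
  assert (I1: forall m k, m = S (3 * k) -> IZR (d m) = (2 * INR k + 1) * INR l - 1).
  { intros m k ->. unfold d. replace (S (3 * k)) with (3 * k + 1)%nat by lia. rewrite d1_1.
    rewrite minus_IZR, mult_IZR, minus_IZR, mult_IZR, <- !INR_IZR_INZ, plus_INR. simpl. ring. }
  assert (I2: forall m k, m = S (S (3 * k)) -> IZR (d m) = 1).
  { intros m k ->. unfold d. replace (S (S (3 * k))) with (3 * k + 2)%nat by lia. rewrite d1_2. reflexivity. }
  assert (I3: forall m k, m = S (S (S (3 * k))) -> IZR (d m) = 2 * INR s - 1).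
  { intros m k ->. unfold d. replace (S (S (S (3 * k)))) with (3 * k + 3)%nat by lia. rewrite d1_3.
    rewrite minus_IZR, mult_IZR, <- INR_IZR_INZ. reflexivity. }
  pose proof (E00 c (INR s) Hc) as H00. pose proof (E20 c (INR s) (INR l) Hc Hs1 Hcls) as H20.
  assert (T: forall k, ep d x (3 * k)%nat = E0 c (INR s) k /\ ep d x (S (3 * k)) = E1 c (INR s) k
                       /\ ep d x (S (S (3 * k))) = E2 c k).
  { induction k as [|k [IH0 [IH1 IH2]]].
    - change (3 * 0)%nat with 0%nat.
      assert (e0: ep d x 0 = E0 c (INR s) 0).
      { rewrite ep_0, H00. unfold d; simpl digits1. rewrite <- INR_IZR_INZ. unfold x. ring. }
      assert (e1: ep d x 1 = E1 c (INR s) 0).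
      { rewrite ep_S, epp_0, e0, (I1 1%nat 0%nat) by reflexivity. unfold E1. rewrite H20, H00. unfold x. simpl. ring. }
      split. exact e0. split. exact e1.
      rewrite ep_SS, (I2 2%nat 0%nat) by reflexivity. rewrite e1, e0. unfold E1. ring.
    - replace (3 * S k)%nat with (S (S (S (3 * k)))) by lia.
      assert (e0: ep d x (S (S (S (3 * k)))) = E0 c (INR s) (S k)).
      { rewrite ep_SS, (I3 _ k) by reflexivity. rewrite IH2, IH1. rewrite <- (R1 c (INR s) Hc k). unfold E1. ring. }
      assert (e1: ep d x (S (S (S (S (3 * k))))) = E1 c (INR s) (S k)).
      { rewrite ep_SS, (I1 _ (S k)) by lia. rewrite e0, IH2. rewrite (R2 c (INR s) (INR l) Hc Hs1 Hcls k). rewrite S_INR. ring. }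
      split. exact e0. split. exact e1.
      rewrite ep_SS, (I2 _ (S k)) by lia. rewrite e1, e0. unfold E1. ring. }
  assert (HE: forall n, ep d x n = En c (INR s) n) by (apply ep_to_En; exact T).
  assert (H0: 0 < x - IZR (d 0%nat) < 1).
  { replace (IZR (d 0%nat)) with (INR s) by (unfold d; simpl digits1; apply INR_IZR_INZ).
    pose proof (C0 c (INR s) Hc Hs1 0) as HC. destruct T with 0%nat as [T0 [T1 _]].
    simpl in T0, T1. rewrite <- T0, <- T1 in HC. rewrite ep_S, ep_0, epp_0, (I1 1%nat 0%nat) in HC by reflexivity.
    replace (IZR (d 0%nat)) with (INR s) in HC by (unfold d; simpl digits1; apply INR_IZR_INZ).
    assert (Hxs: 0 < x - INR s).
    { unfold x. pose proof (exp_ineq1 c (Rgt_not_eq _ _ Hc)). nra. }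
    split. exact Hxs.
    destruct HC as [HC1 _].
    set (Y := ((2 * INR 0 + 1) * INR l - 1) * (INR s - x) + 1) in HC1.
    assert (HY: 0 < Y).
    { apply (neg_div_pos Y (INR s - x)); lra. }
    unfold Y in HY. simpl in HY. nra. }
  assert (HS: forall n, 0 < - ep d x (S n) / ep d x n < 1).
  { intro n. rewrite (Nat.div_mod n 3) by lia.
    pose proof (Nat.mod_upper_bound n 3) as HM.
    destruct (n mod 3)%nat as [|[|[|r]]] eqn:E; try lia; set (k := (n / 3)%nat); destruct (T k) as [T0 [T1 T2]].
    - rewrite Nat.add_0_r, T0, T1. apply C0; lra.
    - replace (3 * k + 1)%nat with (S (3 * k)) by lia. rewrite T1, T2. apply C1; lra.
    - replace (3 * k + 2)%nat with (S (S (3 * k))) by lia. destruct (T (S k)) as [U0 _].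
      replace (3 * S k)%nat with (S (S (S (3 * k)))) in U0 by lia.
      rewrite T2, U0. apply (C2 c (INR s) (INR l)); lra. }
  split.
  - exact (cf_digits x d H0 HS).
  - apply (is_series_ext (fun n => Rabs (En c (INR s) n))).
    { intro n. rewrite (cf_eps x d H0 HS n), HE. reflexivity. }
    rewrite (gauss_final c (INR s) (INR l)) by (try reflexivity; lra).
    apply En_series; lra.
Qed.

Lemma shift2 (a : nat -> R) L : is_series a L -> is_series (fun k => a (S (S k))) (L - a 0%nat - a 1%nat).
Proof.
  intro H.
  apply (is_series_incr_1 (fun k => a (S k))).
  apply (is_series_incr_1 a).
  match goal with |- is_series _ ?v => assert (E: v = L) end.
  { unfold plus; simpl. ring. }
  rewrite E. exact H.
Qed.

Lemma part2 (s : nat) : (1 <= s)%nat ->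
     let x := INR s * exp (/ INR s) in
     (forall n : nat, cf_digit x n = digits2 (Z.of_nat s) n) /\
     is_series (fun n : nat => Rabs (cf_p x n - x * cf_q x n))
       (exp (/ INR s) * sqrt (PI * INR s) * erf (/ sqrt (INR s))
          + INR s * (1 - exp (/ INR s)) - 1).
Proof.
  intros Hs. cbv zeta.
  assert (Hs1: 1 <= INR s) by (replace 1 with (INR 1) by (simpl; ring); apply le_INR; lia).
  set (c := / INR s).
  assert (Hc: 0 < c) by (apply Rinv_0_lt_compat; nra).
  assert (Hcls: c * (1 * INR s) = 1) by (unfold c; field; lra).
  assert (Hl1: 1 <= 1) by lra.
  set (x := INR s * exp c).
  set (d := digits2 (Z.of_nat s)).
  assert (J1: forall m k, m = S (3 * k) -> IZR (d m) = 2 * INR s - 1).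
  { intros m k ->. unfold d. replace (S (3 * k)) with (3 * k + 1)%nat by lia. rewrite d2_1.
    rewrite minus_IZR, mult_IZR, <- INR_IZR_INZ. reflexivity. }
  assert (J2: forall m k, m = S (S (3 * k)) -> IZR (d m) = 2 * (INR k + 1)).
  { intros m k ->. unfold d. replace (S (S (3 * k))) with (3 * k + 2)%nat by lia. rewrite d2_2.
    rewrite mult_IZR, <- INR_IZR_INZ, plus_INR. reflexivity. }
  assert (J3: forall m k, m = S (S (S (3 * k))) -> IZR (d m) = 1).
  { intros m k ->. unfold d. replace (S (S (S (3 * k)))) with (3 * k + 3)%nat by lia. rewrite d2_3. reflexivity. }
  assert (J0: IZR (d 0%nat) = INR s + 1).
  { unfold d; simpl digits2. rewrite plus_IZR, <- INR_IZR_INZ. reflexivity. }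
  pose proof (E00 c (INR s) Hc) as H00. pose proof (E20 c (INR s) 1 Hc Hs1 Hcls) as H20.
  assert (T: forall k, ep d x (3 * k)%nat = E2 c k /\ ep d x (S (3 * k)) = E0 c (INR s) (S k)
                       /\ ep d x (S (S (3 * k))) = E1 c (INR s) (S k)).
  { induction k as [|k [IH0 [IH1 IH2]]].
    - change (3 * 0)%nat with 0%nat.
      assert (e0: ep d x 0 = E2 c 0).
      { rewrite ep_0, H20, J0. unfold x. ring. }
      assert (e1: ep d x 1 = E0 c (INR s) 1).
      { rewrite ep_S, epp_0, e0, (J1 1%nat 0%nat) by reflexivity. rewrite <- (R1 c (INR s) Hc 0).
        rewrite H00, H20. unfold x. ring. }
      split. exact e0. split. exact e1.
      rewrite ep_SS, (J2 2%nat 0%nat) by reflexivity. rewrite e1, e0.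
      rewrite (R2 c (INR s) 1 Hc Hs1 Hcls 0). simpl. ring.
    - replace (3 * S k)%nat with (S (S (S (3 * k)))) by lia.
      assert (e0: ep d x (S (S (S (3 * k)))) = E2 c (S k)).
      { rewrite ep_SS, (J3 _ k) by reflexivity. rewrite IH2, IH1. unfold E1. ring. }
      assert (e1: ep d x (S (S (S (S (3 * k))))) = E0 c (INR s) (S (S k))).
      { rewrite ep_SS, (J1 _ (S k)) by lia. rewrite e0, IH2. rewrite <- (R1 c (INR s) Hc (S k)). unfold E1. ring. }
      split. exact e0. split. exact e1.
      rewrite ep_SS, (J2 _ (S k)) by lia. rewrite e1, e0.
      rewrite (R2 c (INR s) 1 Hc Hs1 Hcls (S k)). ring. }
  assert (HE: forall n, ep d x n = En c (INR s) (S (S n))).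
  { intro n. rewrite (Nat.div_mod n 3) by lia.
    pose proof (Nat.mod_upper_bound n 3) as HM.
    destruct (n mod 3)%nat as [|[|[|r]]] eqn:E; try lia; set (k := (n / 3)%nat); destruct (T k) as [T0 [T1 T2]].
    - rewrite Nat.add_0_r, T0. replace (S (S (3 * k))) with (3 * k + 2)%nat by lia. rewrite En2. reflexivity.
    - replace (3 * k + 1)%nat with (S (3 * k)) by lia. rewrite T1.
      replace (S (S (S (3 * k)))) with (3 * S k)%nat by lia. rewrite En0. reflexivity.
    - replace (3 * k + 2)%nat with (S (S (3 * k))) by lia. rewrite T2.
      replace (S (S (S (S (3 * k))))) with (3 * S k + 1)%nat by lia. rewrite En1. reflexivity. }
  assert (E10: E1 c (INR s) 0 = 1) by (unfold E1; rewrite H20, H00; ring).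
  assert (H0: 0 < x - IZR (d 0%nat) < 1).
  { pose proof (C1 c (INR s) Hc Hs1 0) as HC. rewrite E10, H20 in HC. rewrite J0.
    unfold Rdiv in HC. rewrite Rinv_1, Rmult_1_r in HC. unfold x. lra. }
  assert (HS: forall n, 0 < - ep d x (S n) / ep d x n < 1).
  { intro n. rewrite (Nat.div_mod n 3) by lia.
    pose proof (Nat.mod_upper_bound n 3) as HM.
    destruct (n mod 3)%nat as [|[|[|r]]] eqn:E; try lia; set (k := (n / 3)%nat); destruct (T k) as [T0 [T1 T2]].
    - rewrite Nat.add_0_r, T0, T1. apply (C2 c (INR s) 1); lra.
    - replace (3 * k + 1)%nat with (S (3 * k)) by lia. rewrite T1, T2. apply C0; lra.
    - replace (3 * k + 2)%nat with (S (S (3 * k))) by lia. destruct (T (S k)) as [U0 _].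
      replace (3 * S k)%nat with (S (S (S (3 * k)))) in U0 by lia.
      rewrite T2, U0. apply C1; lra. }
  split.
  - exact (cf_digits x d H0 HS).
  - apply (is_series_ext (fun n => Rabs (En c (INR s) (S (S n))))).
    { intro n. rewrite (cf_eps x d H0 HS n), HE. reflexivity. }
    assert (G: exp c * sqrt (PI * INR s) * erf (/ sqrt (INR s)) = 2 * c * INR s * Ig c).
    { rewrite <- (gauss_final c (INR s) 1); try lra.
      replace (PI * INR s / 1) with (PI * INR s) by field. rewrite Rmult_1_l. reflexivity.
      unfold c. rewrite Rmult_1_l. reflexivity. }
    rewrite G.
    assert (A0: Rabs (En c (INR s) 0) = INR s * (exp c - 1)).
    { change 0%nat with (3 * 0)%nat. rewrite En0, H00.
      rewrite Rabs_left. ring. unfold c. pose proof (exp_ineq1 c (Rgt_not_eq _ _ Hc)). fold c. nra. }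
    assert (A1: Rabs (En c (INR s) 1) = 1).
    { change 1%nat with (3 * 0 + 1)%nat. rewrite En1, E10. apply Rabs_R1. }
    replace (2 * c * INR s * Ig c + INR s * (1 - exp c) - 1) with (2 * c * INR s * Ig c - Rabs (En c (INR s) 0) - Rabs (En c (INR s) 1)) by (rewrite A0, A1; ring).
    apply (shift2 (fun n => Rabs (En c (INR s) n))).
    apply En_series; lra.
Qed.


Theorem theorem3 :
  (forall l s : nat, (2 <= l)%nat -> (1 <= s)%nat ->
     let x := INR s * exp (/ (INR l * INR s)) in
     (forall n : nat, cf_digit x n = digits1 (Z.of_nat l) (Z.of_nat s) n) /\
     is_series (fun n : nat => Rabs (cf_p x n - x * cf_q x n))
       (exp (/ (INR l * INR s)) * sqrt (PI * INR s / INR l)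
          * erf (/ sqrt (INR l * INR s)))) /\
  (forall s : nat, (1 <= s)%nat ->
     let x := INR s * exp (/ INR s) in
     (forall n : nat, cf_digit x n = digits2 (Z.of_nat s) n) /\
     is_series (fun n : nat => Rabs (cf_p x n - x * cf_q x n))
       (exp (/ INR s) * sqrt (PI * INR s) * erf (/ sqrt (INR s))
          + INR s * (1 - exp (/ INR s)) - 1)).
Proof.
  split. exact part1. exact part2.
Qed.
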